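(* For a word $u$ of length $n$, the longest left-seed array $\mathsf{LSeed}^M[1..n]$, where $\mathsf{LSeed}^M[i]=\mathrm{lseedmax}(u[1..i])$, can be computed in $O(n)$ time.
   Context: Words are over a finite alphabet; $u[1..i]$ is the prefix of length $i$. A word $s$ covers $w$ if every position of $w$ lies in some occurrence of $s$ in $w$. A seed of $x$ is a factor $s$ of $x$ such that $x$ is a factor of some word covered by $s$; a left seed is a seed that is a prefix of $x$. $\mathrm{lseedmax}(x)$ is the length of the longest left seed of $x$ shorter than $x$, or $0$ if there is none. *)

(* Defs.v *)
From mathcomp Require Import all_boot.
Set Implicit Arguments. Unset Strict Implicit. Unset Printing Implicit Defensive.

Section Words.
Variable A : eqType.

Definition occurs_at (s w : seq A) (j : nat) : bool :=
  take (size s) (drop j w) == s.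

Definition covers (s w : seq A) : Prop :=
  forall p, p < size w -> exists j, occurs_at s w j /\ j <= p < j + size s.

Definition seed (s x : seq A) : Prop :=
  infix s x /\ exists y : seq A, covers s y /\ infix x y.

Definition left_seed (s x : seq A) : Prop := seed s x /\ prefix s x.

Definition lseedmax_is (x : seq A) (v : nat) : Prop :=
  ((0 < v < size x /\ left_seed (take v x) x) \/
   (v = 0 /\ forall l, l < size x -> ~ left_seed (take l x) x)) /\
  (forall l, v < l < size x -> ~ left_seed (take l x) x).
End Words.

Inductive instr : Type :=
  | IConst of nat & nat
  | IAdd of nat & nat & nat
  | ISub of nat & nat & nat        (* ISub r a b   : R[r] := R[a] - R[b] (truncated) *)
  | ILoad of nat & nat
  | IStore of nat & nat
  | IJz of nat & nat
  | IJmp of nat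
  | IHalt.

Definition program := seq instr.
Definition memory := nat -> nat.
Definition config : Type := (nat * memory)%type.

Definition upd (m : memory) (r v : nat) : memory :=
  fun x => if x == r then v else m x.

Definition step (P : program) (c : config) : option config :=
  let: (pc, m) := c in
  match nth IHalt P pc with
  | IConst r k => Some (pc.+1, upd m r k)
  | IAdd r a b => Some (pc.+1, upd m r (m a + m b))
  | ISub r a b => Some (pc.+1, upd m r (m a - m b))
  | ILoad r a => Some (pc.+1, upd m r (m (m a)))
  | IStore a b => Some (pc.+1, upd m (m a) (m b))
  | IJz r l => Some (if m r == 0 then l else pc.+1, m)
  | IJmp l => Some (l, m)
  | IHalt => None
  end.

Fixpoint run (P : program) (k : nat) (c : config) : option config :=
  match k with
  | 0 => Some c
  | k'.+1 => match step P c with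
             | Some c' => run P k' c'
             | None => None
             end
  end.

(* Input encoding of a word u of length n over a finite alphabet:
   R[0] = n, R[i] = (rank of the i-th letter) + 1 for 1 <= i <= n, all other
   registers 0; the machine starts at pc = 0. *)
Definition init_mem (A : finType) (u : seq A) : memory :=
  fun a => if a == 0 then size u
           else match onth u a.-1 with
                | Some x => (enum_rank x).+1
                | None => 0
                end.

(* Word-RAM restriction: during the first k steps from c, every register
   value stays bounded by W (words of O(log n) bits when W is polynomial). *)
Definition values_bounded (P : program) (k : nat) (c : config) (W : nat) : Prop :=
  forall j c', j <= k -> run P j c = Some c' -> forall a, c'.2 a <= W.

(* Main.v *)
Require Import Defs.
From mathcomp Require Import all_boot.
From mathcomp Require Import zify.
Set Implicit Arguments. Unset Strict Implicit. Unset Printing Implicit Defensive.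

Definition isb (c : nat -> nat) (q l : nat) : bool :=
  (l < q) && all (fun t => c t == c (q - l + t)) (iota 0 l).

Definition Fb (c : nat -> nat) (q : nat) : nat := \max_(l < q | isb c q l) l.

Lemma isbP c q l : isb c q l <-> l < q /\ forall t, t < l -> c t = c (q - l + t).
Proof.
rewrite /isb; split.
  case/andP=> H1 /allP H2; split=> // t Ht; apply/eqP/H2; rewrite mem_iota; lia.
case=> H1 H2; rewrite H1 /=; apply/allP=> t; rewrite mem_iota => Ht; apply/eqP/H2; lia.
Qed.

Lemma isb0 c q : 0 < q -> isb c q 0.
Proof. by move=> Hq; apply/isbP; split. Qed.

Lemma F_max c q l : isb c q l -> l <= Fb c q.
Proof.
move=> H; have Hl : l < q by case/isbP: H.
by rewrite /Fb (bigmax_sup (Ordinal Hl)).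
Qed.

Lemma F_isb c q : 0 < q -> isb c q (Fb c q).
Proof.
move=> Hq; rewrite /Fb (bigmax_eq_arg (Ordinal Hq)) /=; last exact: isb0.
by case: arg_maxnP => //=; exact: isb0.
Qed.

Lemma F_lt c q : 0 < q -> Fb c q < q.
Proof. by move=> Hq; case/isbP: (F_isb c Hq). Qed.

Lemma isb_trans c q l l' : isb c q l -> isb c l l' -> isb c q l'.
Proof.
move=> /isbP [H1 H2] /isbP [H3 H4]; apply/isbP; split; first lia.
move=> t Ht; rewrite H4 // H2; last lia.
congr c; lia.
Qed.

Lemma isb_sub c q l l' : isb c q l -> isb c q l' -> l' < l -> isb c l l'.
Proof.
move=> /isbP [H1 H2] /isbP [H3 H4] Hl; apply/isbP; split=> // t Ht.
rewrite H4 // [RHS]H2; last lia.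
congr c; lia.
Qed.

Lemma isb_ext c q l : 0 < q -> isb c q.+1 l.+1 <-> isb c q l /\ c l = c q.
Proof.
move=> Hq; split.
  move=> /isbP [H1 H2]; split; last first.
    rewrite H2 //; congr c; lia.
  apply/isbP; split; first lia.
  move=> t Ht; rewrite H2; last lia; congr c; lia.
move=> [/isbP [H1 H2] H3]; apply/isbP; split; first lia.
move=> t Ht; have [Ht'|Ht'] : t < l \/ t = l by lia.
  by rewrite H2 //; congr c; lia.
by subst t; rewrite H3; congr c; lia.
Qed.

Definition Kgood c q kk := isb c q kk /\ forall l, isb c q l -> kk < l -> c l <> c q.

Lemma K_init c q : 0 < q -> Kgood c q (Fb c q).
Proof.
move=> Hq; split; first exact: F_isb.
by move=> l /F_max Hl Hlt; lia.
Qed.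

Lemma K_step c q kk : Kgood c q kk -> 0 < kk -> c kk <> c q -> Kgood c q (Fb c kk).
Proof.
move=> [H1 H2] Hk Hne; split; first exact: isb_trans H1 (F_isb c Hk).
move=> l Hl Hlt.
have [Hl1|[Hl1|Hl1]] : kk < l \/ l = kk \/ l < kk by lia.
- exact: H2.
- by subst l.
- have := F_max (isb_sub H1 Hl Hl1); lia.
Qed.

Lemma K_match c q kk : 0 < q -> Kgood c q kk -> c kk = c q -> Fb c q.+1 = kk.+1.
Proof.
move=> Hq [H1 H2] He; apply/eqP; rewrite eqn_leq; apply/andP; split; last first.
  by apply: F_max; apply/(isb_ext _ _ Hq).
have H3 := F_isb c (ltn0Sn q).
case E: (Fb c q.+1) => [//|l].
rewrite E in H3; case/(isb_ext _ _ Hq): H3 => H4 H5.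
have [//|Hlt] := leqP l kk.
by case: (H2 l H4 Hlt).
Qed.

Lemma K_zero c q : 0 < q -> Kgood c q 0 -> c 0 <> c q -> Fb c q.+1 = 0.
Proof.
move=> Hq [H1 H2] Hne.
have H3 := F_isb c (ltn0Sn q).
case E: (Fb c q.+1) => [//|l].
rewrite E in H3; case/(isb_ext _ _ Hq): H3 => H4 H5.
case: l E H4 H5 => [|l] E H4 H5; first by [].
by case: (H2 l.+1 H4 (ltn0Sn _)).
Qed.

Lemma F1 c : Fb c 1 = 0.
Proof. by have := F_lt c (ltn0Sn 0); lia. Qed.


Lemma S1 (A : eqType) (x : seq A) b : 0 < b < size x ->
  take b x = drop (size x - b) x -> left_seed (take (size x).-1 x) x.
Proof.
move=> Hb H.
set i := size x; set p := i - b.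
have Hi : 0 < i by lia.
set s := take i.-1 x.
have Hs : size s = i.-1 by rewrite size_take; case: ifP => //; lia.
have Hsp : size (take p x) = p by rewrite size_take; case: ifP => //; lia.
have Es : s = take p x ++ take (b.-1) x.
  rewrite /s -[in LHS](cat_take_drop p x) take_cat Hsp.
  have -> : i.-1 < p = false by lia.
  congr (_ ++ _); rewrite /p /i -H take_takel; [congr take; lia | lia].
set y := take p x ++ s.
have Hpre : prefix s x by rewrite prefixE Hs.
split; last exact: Hpre.
split; first exact: prefixW.
exists y; split.
  move=> pos; rewrite size_cat Hsp Hs => Hpos.
  have [Hl|Hl] := ltnP pos i.-1.
    exists 0; split; last lia.
    rewrite /occurs_at drop0 Hs /y take_cat Hsp.
    have -> : i.-1 < p = false by lia.
    rewrite {2}Es; apply/eqP; congr (_ ++ _).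
    rewrite /s take_takel; [congr take; lia|lia].
  exists p; split; last lia.
  by rewrite /occurs_at /y drop_cat Hsp ltnn subnn drop0 take_size.
apply: prefixW; rewrite prefixE; apply/eqP.
rewrite /y take_cat Hsp.
have -> : i < p = false by lia.
rewrite /s take_takel; last lia.
have -> : i - p = b by lia.
by rewrite H cat_take_drop.
Qed.

Lemma S2 (A : eqType) (x : seq A) : 0 < size x ->
  (forall b, 0 < b < size x -> take b x <> drop (size x - b) x) ->
  forall l, l < size x -> ~ left_seed (take l x) x.
Proof.
move=> Hi Hnb l Hl [[_ [y [Hc Hxy]]] _].
have x0 : A by case: x Hi {Hnb Hl Hc Hxy} => // a _; exact: a.
set i := size x in Hi Hnb Hl.
have Hsl : size (take l x) = l by rewrite size_take; case: ifP => //; lia.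
case/infixP: Hxy => [a [z Ey]].
set q := size a.
have Hsy : size y = q + i + size z by rewrite Ey !size_cat; lia.
have [j [Hocc Hj]] := Hc (q + i - 1) (ltac:(lia)).
rewrite Hsl in Hj.
move: Hocc; rewrite /occurs_at Hsl => /eqP Hocc.
have Hyj : forall t, t < l -> nth x0 y (j + t) = nth x0 x t.
  move=> t Ht.
  have := congr1 (nth x0 ^~ t) Hocc; rewrite nth_take // nth_take // nth_drop => ->.
  done.
have Hyq : forall t, t < i -> nth x0 y (q + t) = nth x0 x t.
  move=> t Ht; rewrite Ey nth_cat.
  have -> : q + t < size a = false by rewrite /q; lia.
  have -> : q + t - size a = t by rewrite /q; lia.
  by rewrite nth_cat Ht.
have Ei : size x = i by [].
clearbody i q.
have Hjy : j + l <= size y.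
  have := congr1 size Hocc; rewrite Hsl size_take size_drop.
  by case: (ltnP l (size y - j)) => H; lia.
have Hjq : q <= j.
  by have := Hj; lia.
move Ed: (j - q) => d.
have Hd : 0 < d < i by lia.
apply: (Hnb (i - d)); first lia.
have Hid : i - (i - d) = d by lia.
rewrite Hid.
apply: (@eq_from_nth _ x0).
  rewrite size_take size_drop Ei; case: ifP; lia.
move=> t; rewrite size_take Ei; case: ifP => [_ Ht|]; last lia.
rewrite nth_take // nth_drop.
rewrite -(Hyj t); last lia.
rewrite -(Hyq (d + t)); last lia.
congr nth; lia.
Qed.


Definition Eblock (o e : nat) : program :=
  [:: IConst (o+1) 1; IAdd (o+2) 4 6; IAdd (o+3) 7 6; IAdd (o+4) 4 1; IConst (o+5) 1;
      ISub (o+6) (o+4) (o+5); IJz (o+6) 122; IAdd (o+7) (o+3) (o+5); ILoad (o+8) (o+7);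
      IJz (o+8) (e+11); ISub (o+8) (o+5) (o+1); IAdd (o+7) (o+2) (o+5);
      IStore (o+7) (o+8); IAdd (o+5) (o+5) (o+1); IJmp (e+5)].

Definition prolA : program :=
  [:: IJz 0 122; IAdd 0 0 0; IAdd 0 0 0; IAdd 0 0 0; IAdd 0 0 0; IAdd 0 0 0;
      IStore 0 1; IConst 1 1] ++
  flatten [seq [:: IAdd 0 0 1; IStore 0 j] | j <- iota 2 15].

Definition mainP : program :=
  [:: (* 38 *) IConst 2 15; ISub 0 0 2; IConst 2 32; IConst 4 0; IConst 5 0;
      (* 43 *) ISub 6 0 5; IJz 6 48; IAdd 4 4 1; IAdd 5 5 2; IJmp 43;
      (* 48 *) IConst 2 16; IAdd 3 0 2; IAdd 7 3 4; IConst 10 16; IConst 8 0;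
      (* 53 *) ISub 9 4 8; IJz 9 65; ISub 9 10 8; IJz 9 59; IAdd 11 0 8; IJmp 60;
      (* 59 *) IAdd 11 8 1; ILoad 12 11; IAdd 11 3 8; IStore 11 12; IAdd 8 8 1; IJmp 53;
      (* 65 *) IConst 13 1; IConst 14 0; IAdd 11 7 1; IStore 11 14;
      (* 69 *) ISub 9 4 13; IJz 9 89; IAdd 11 3 13; ILoad 15 11;
      (* 73 *) IAdd 11 3 14; ILoad 12 11; ISub 9 12 15; IJz 9 78; IJmp 80;
      (* 78 *) ISub 9 15 12; IJz 9 84;
      (* 80 *) IJz 14 85; IAdd 11 7 14; ILoad 14 11; IJmp 73;
      (* 84 *) IAdd 14 14 1; IAdd 13 13 1; IAdd 11 7 13; IStore 11 14; IJmp 69;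
      (* 89 *) IConst 6 0; ISub 9 10 4; IJz 9 107].

Definition P : program := prolA ++ mainP ++ Eblock 32 92 ++ Eblock 0 107 ++ [:: IHalt].

Lemma size_check : (size prolA = 38) * (size (prolA ++ mainP) = 92).
Proof. by []. Qed.

Definition bnd (W : nat) (m : memory) := forall a, m a <= W.

Inductive steps (W : nat) : config -> config -> nat -> Prop :=
| st0 c : bnd W c.2 -> steps W c c 0
| stS c c' c'' k : bnd W c.2 -> step P c = Some c' -> steps W c' c'' k -> steps W c c'' k.+1.

Lemma updE m r v x : upd m r v x = if x == r then v else m x.
Proof. by []. Qed.

Lemma bnd_upd W m r v : bnd W m -> v <= W -> bnd W (upd m r v).
Proof. by move=> Hm Hv x; rewrite updE; case: ifP. Qed.

Lemma eqF_nat (x y : nat) : x <> y -> (x == y) = false.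
Proof. by move/eqP/negbTE. Qed.
Lemma eqT_nat (x y : nat) : x = y -> (x == y) = true.
Proof. by move=> ->; rewrite eqxx. Qed.

Ltac rif := repeat match goal with
 | |- context [?x == ?y :> nat] =>
    (rewrite (@eqF_nat x y); [|lia]) || (rewrite (@eqT_nat x y); [|lia])
 end.


Ltac bnd_tac := repeat apply bnd_upd; try assumption; rewrite ?updE /=; rif;
  try (apply: leq_trans (leq_subr _ _) _); try (by lia); try by [].
Ltac norm := rewrite ?updE /=; rif; rewrite /=.
Ltac stp := eapply stS; [ bnd_tac | rewrite /step /=; reflexivity | norm ].


Lemma steps_bnd_end W c c' k : steps W c c' k -> bnd W c'.2.
Proof. by elim=> //. Qed.

Lemma steps_bnd_start W c c' k : steps W c c' k -> bnd W c.2.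
Proof. by case. Qed.

Lemma steps_trans W c1 c2 c3 k1 k2 :
  steps W c1 c2 k1 -> steps W c2 c3 k2 -> steps W c1 c3 (k1 + k2).
Proof.
elim=> [c _ //|c c' c'' k Hb Hs _ IH] H2.
by rewrite addSn; apply: stS Hb Hs (IH H2).
Qed.

Lemma steps_run W c c' k : steps W c c' k ->
  run P k c = Some c' /\ values_bounded P k c W.
Proof.
elim=> [c0 Hb|c0 c1 c2 k0 Hb Hs _ [IHr IHv]].
  by split=> // [] [|j] //= c1 _ [<-].
split; first by rewrite /= Hs.
move=> [|j] c3 Hj /=; first by case=> <-.
rewrite Hs => Hr; exact: IHv Hj Hr.
Qed.

Lemma loop_gen W (I : nat -> memory -> Prop) (f : memory -> nat) pc pcE N cb ce a
  (Q : memory -> Prop) :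
  (forall j m, j < N -> I j m -> exists k m',
      k + a * f m' <= cb + a * f m /\ steps W (pc, m) (pc, m') k /\ I j.+1 m') ->
  (forall m, I N m -> exists k m', k <= ce /\ steps W (pc, m) (pcE, m') k /\ Q m') ->
  forall j m, j <= N -> I j m -> exists k m',
      k <= cb * (N - j) + ce + a * f m /\ steps W (pc, m) (pcE, m') k /\ Q m'.
Proof.
move=> Hit Hex j m Hj; move Hd: (N - j) => d.
elim: d j m Hj Hd => [|d IH] j m Hj Hd HI.
  have E : j = N by lia.
  subst j; have [k [m' [Hk [Hs HQ]]]] := Hex m HI.
  by exists k, m'; split=> //; rewrite muln0 add0n; apply: leq_trans Hk (leq_addr _ _).
have Hj' : j < N by lia.
have [k1 [m1 [Hk1 [Hs1 HI1]]]] := Hit j m Hj' HI.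
have [k2 [m2 [Hk2 [Hs2 HQ]]]] := IH j.+1 m1 Hj' (ltac:(lia)) HI1.
exists (k1 + k2), m2; split; last split=> //; last exact: steps_trans Hs1 Hs2.
rewrite mulnS.
move: Hk1 Hk2; move: (a * f m) (a * f m1) (cb * d) => x y z; lia.
Qed.

Definition D1 (n : nat) (c : nat -> nat) (m : memory) :=
  (forall t, t < n -> t < 16 -> m (32 * n + t) = c t) /\
  (forall a, 17 <= a -> a <= n -> m a = c a.-1).

Lemma D1_upd n c m r v : 0 < n -> (r <= 16 \/ 32 * n + 16 <= r) -> D1 n c m -> D1 n c (upd m r v).
Proof.
move=> Hn Hr [H1 H2]; split=> [t Ht1 Ht2|a Ha1 Ha2]; rewrite updE.
  by rewrite eqF_nat; [exact: H1|lia].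
by rewrite eqF_nat; [exact: H2|lia].
Qed.

Ltac d1 := repeat (apply D1_upd; [lia|lia|]); assumption.

Lemma phaseB W n c m : 0 < n -> 34 * n + 68 <= W -> bnd W m ->
  m 0 = 32 * n + 15 -> m 1 = 1 -> D1 n c m ->
  exists k m', k <= 5 * n + 8 /\ steps W (38, m) (48, m') k /\
    [/\ m' 0 = 32 * n, m' 1 = 1, m' 4 = n & D1 n c m'].
Proof.
move=> Hn HW Hb H0 H1 HD.
pose I := fun j (m : memory) => D1 n c m /\ bnd W m /\ (m 0 = 32 * n /\ m 1 = 1 /\ m 2 = 32 /\ m 4 = j /\
   m 5 = 32 * j).
have Hit : forall j m, j < n -> I j m -> exists k m',
      k + 0 * (fun _ => 0) m' <= 5 + 0 * (fun _ => 0) m /\ steps W (43, m) (43, m') k /\ I j.+1 m'.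
  move=> j m1 Hj [GD [Gb [G0 [G1 [G2 [G4 G5]]]]]].
  do 2 eexists; split; last split.
  2: { stp. stp. stp. stp. stp. apply: st0; bnd_tac. }
  by [].
  split; [d1|split; [bnd_tac|repeat split; norm; lia]].
have Hex : forall m, I n m -> exists k m', k <= 2 /\ steps W (43, m) (48, m') k /\
    [/\ m' 0 = 32 * n, m' 1 = 1, m' 4 = n & D1 n c m'].
  move=> m1 [GD [Gb [G0 [G1 [G2 [G4 G5]]]]]].
  do 2 eexists; split; last split.
  2: { stp. stp. apply: st0; bnd_tac. }
  by [].
  split; norm; try lia. d1.
have H5 : exists k m', k <= 5 /\ steps W (38, m) (43, m') k /\ I 0 m'.
  do 2 eexists; split; last split.
  2: { stp. stp. stp. stp. stp. apply: st0; bnd_tac. }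
  by [].
  split; [d1|split; [bnd_tac|repeat split; norm; lia]].
have [k1 [m1 [Hk1 [Hs1 HI1]]]] := H5.
have [k2 [m2 [Hk2 [Hs2 HQ]]]] := loop_gen Hit Hex (leq0n n) HI1.
exists (k1 + k2), m2; split; last split=> //; last exact: steps_trans Hs1 Hs2.
move: Hk2; rewrite /= muln0 addn0 subn0; lia.
Qed.

Definition LR (n : nat) (c : nat -> nat) (j : nat) (m : memory) :=
  forall t, t < j -> m (32 * n + 16 + t) = c t.

Lemma phaseC W n c m : 0 < n -> 34 * n + 68 <= W -> bnd W m ->
  m 0 = 32 * n -> m 1 = 1 -> m 4 = n -> D1 n c m ->
  exists k m', k <= 11 * n + 7 /\ steps W (48, m) (65, m') k /\
    [/\ LR n c n m', m' 1 = 1, m' 3 = 32 * n + 16, m' 4 = n & m' 7 = 33 * n + 16 /\ m' 10 = 16].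
Proof.
move=> Hn HW Hb H0 H1 H4 HD.
pose I := fun j (m : memory) => D1 n c m /\ bnd W m /\ LR n c j m /\
   (m 0 = 32 * n /\ m 1 = 1 /\ m 3 = 32 * n + 16 /\ m 4 = n /\ m 7 = 33 * n + 16 /\
    m 8 = j /\ m 10 = 16).
have Hit : forall j m, j < n -> I j m -> exists k m',
      k + 0 * (fun _ => 0) m' <= 11 + 0 * (fun _ => 0) m /\ steps W (53, m) (53, m') k /\ I j.+1 m'.
  move=> j m1 Hj [GD [Gb [GL [G0 [G1 [G3 [G4 [G7 [G8 G10]]]]]]]]].
  have [Hj16|Hj16] := ltnP j 16.
  - have HV : m1 (m1 0 + m1 8) = c j by rewrite G0 G8; apply: GD.1.
    do 2 eexists; split; last split.
    2: { stp. stp. stp. stp. stp. stp. stp. stp. stp. stp. stp. apply: st0; bnd_tac. }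
    by [].
    split; first by norm; d1.
    split; first by bnd_tac.
    split; last by (repeat split; norm; lia).
    move=> t Ht; rewrite !updE.
    have [Ht'|Ht'] : t < j \/ t = j by lia.
      rif; exact: GL.
    rif; subst t; exact: HV.
  - have HV : m1 (m1 8 + m1 1) = c j by rewrite G8 G1 addn1; apply: GD.2; lia.
    do 2 eexists; split; last split.
    2: { stp. stp. stp. stp. stp. stp. stp. stp. stp. stp. apply: st0; bnd_tac. }
    by [].
    split; first by norm; d1.
    split; first by bnd_tac.
    split; last by (repeat split; norm; lia).
    move=> t Ht; rewrite !updE.
    have [Ht'|Ht'] : t < j \/ t = j by lia.
      rif; exact: GL.
    rif; subst t; exact: HV.
have Hex : forall m, I n m -> exists k m', k <= 2 /\ steps W (53, m) (65, m') k /\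
    [/\ LR n c n m', m' 1 = 1, m' 3 = 32 * n + 16, m' 4 = n & m' 7 = 33 * n + 16 /\ m' 10 = 16].
  move=> m1 [GD [Gb [GL [G0 [G1 [G3 [G4 [G7 [G8 G10]]]]]]]]].
  do 2 eexists; split; last split.
  2: { stp. stp. apply: st0; bnd_tac. }
  by [].
  split; norm; try lia.
  by move=> t Ht; rewrite updE; rif; apply: GL.
have H5 : exists k m', k <= 5 /\ steps W (48, m) (53, m') k /\ I 0 m'.
  do 2 eexists; split; last split.
  2: { stp. stp. stp. stp. stp. apply: st0; bnd_tac. }
  by [].
  split; first by d1.
  split; first by bnd_tac.
  split; first by [].
  repeat split; norm; lia.
have [k1 [m1 [Hk1 [Hs1 HI1]]]] := H5.
have [k2 [m2 [Hk2 [Hs2 HQ]]]] := loop_gen Hit Hex (leq0n n) HI1.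
exists (k1 + k2), m2; split; last split=> //; last exact: steps_trans Hs1 Hs2.
move: Hk2; rewrite /= muln0 addn0 subn0; lia.
Qed.

Definition FR (n : nat) (c : nat -> nat) (q : nat) (m : memory) :=
  forall p, 0 < p -> p <= q -> m (33 * n + 16 + p) = Fb c p.

Definition Dinv W n c q (m : memory) :=
  LR n c n m /\ bnd W m /\ FR n c q m /\
  (m 1 = 1 /\ m 3 = 32 * n + 16 /\ m 4 = n /\ m 7 = 33 * n + 16 /\ m 10 = 16 /\
   m 13 = q /\ m 14 = Fb c q /\ 0 < q /\ q <= n).

Definition Kst W n c q kk (m : memory) :=
  LR n c n m /\ bnd W m /\ FR n c q m /\
  (m 1 = 1 /\ m 3 = 32 * n + 16 /\ m 4 = n /\ m 7 = 33 * n + 16 /\ m 10 = 16 /\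
   m 13 = q /\ m 14 = kk /\ m 15 = c q /\ 0 < q /\ q < n) /\ Kgood c q kk.

Lemma inner W n c q : 34 * n + 68 <= W -> forall kk m, Kst W n c q kk m ->
  exists k m', k + 10 * m' 14 <= 10 * kk + 21 /\ steps W (73, m) (69, m') k /\
     Dinv W n c q.+1 m'.
Proof.
move=> HW kk; elim/ltn_ind: kk => kk IH m.
move=> [GL [Gb [GF [[G1 [G3 [G4 [G7 [G10 [G13 [G14 [G15 [Hq Hqn]]]]]]]]] GK]]]].
have Hkq : kk < q by case: GK => /isbP [].
have HV : m (m 3 + m 14) = c kk by rewrite G3 G14; apply: GL; lia.
have [Heq|Hne] := eqVneq (c kk) (c q).
-
  have HFq := K_match Hq GK Heq.
  do 2 eexists; split; last split.
  2: { do 11 stp. apply: st0; bnd_tac. }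
  norm; lia.
  split; first by move=> t Ht; norm; apply: GL.
  split; first by bnd_tac.
  split; last by (repeat split; norm; lia).
  move=> p Hp1 Hp2; norm.
  have [Hp|Hp] : p <= q \/ p = q.+1 by lia.
    by rif; apply: GF.
  by subst p; rif; rewrite HFq; lia.
have [Hz|Hnz] := posnP kk.
- rewrite {}Hz in G14 GK Hne HV Hkq.
  have HFq := K_zero Hq GK (elimN eqP Hne).
  have [Hlt|Hgt] : c 0 < c q \/ c q < c 0 by lia.
  + do 2 eexists; split; last split.
    2: { do 11 stp. apply: st0; bnd_tac. }
    norm; lia.
    split; first by move=> t Ht; norm; apply: GL.
    split; first by bnd_tac.
    split; last by (repeat split; norm; lia).
    move=> p Hp1 Hp2; norm.
    have [Hp|Hp] : p <= q \/ p = q.+1 by lia.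
      by rif; apply: GF.
    by subst p; rif; rewrite HFq; lia.
  + do 2 eexists; split; last split.
    2: { do 10 stp. apply: st0; bnd_tac. }
    norm; lia.
    split; first by move=> t Ht; norm; apply: GL.
    split; first by bnd_tac.
    split; last by (repeat split; norm; lia).
    move=> p Hp1 Hp2; norm.
    have [Hp|Hp] : p <= q \/ p = q.+1 by lia.
      by rif; apply: GF.
    by subst p; rif; rewrite HFq; lia.
- (* mismatch, kk > 0: follow failure link *)
  have HFk : m (m 7 + m 14) = Fb c kk by rewrite G7 G14; apply: GF; lia.
  have HK := K_step GK Hnz (elimN eqP Hne).
  have Hlt := F_lt c Hnz.
  have [k1 [m1 [Hs1 [Hk1 HK1]]]] : exists k1 m1, steps W (73, m) (73, m1) k1 /\ k1 <= 10 /\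
      Kst W n c q (Fb c kk) m1.
    have [Hlt'|Hgt] : c kk < c q \/ c q < c kk by lia.
    + do 2 eexists; split; last split.
      1: { stp. stp. stp. stp. stp. stp. stp. stp. stp. stp. apply: st0; bnd_tac. }
      by [].
      split; first by move=> t Ht; norm; apply: GL.
      split; first by bnd_tac.
      split; first by move=> p Hp1 Hp2; norm; apply: GF.
      split; last by [].
      repeat split; norm; lia.
    + do 2 eexists; split; last split.
      1: { stp. stp. stp. stp. stp. stp. stp. stp. stp. apply: st0; bnd_tac. }
      by [].
      split; first by move=> t Ht; norm; apply: GL.
      split; first by bnd_tac.
      split; first by move=> p Hp1 Hp2; norm; apply: GF.
      split; last by [].
      repeat split; norm; lia.
  have [k2 [m2 [Hk2 [Hs2 HD]]]] := IH _ Hlt m1 HK1.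
  exists (k1 + k2), m2; split; last split=> //; last exact: steps_trans Hs1 Hs2.
  lia.
Qed.

Lemma phaseD W n c m : 0 < n -> 34 * n + 68 <= W -> bnd W m -> LR n c n m ->
  m 1 = 1 -> m 3 = 32 * n + 16 -> m 4 = n -> m 7 = 33 * n + 16 -> m 10 = 16 ->
  exists k m', k <= 25 * n + 6 /\ steps W (65, m) (89, m') k /\
    [/\ FR n c n m', m' 1 = 1, m' 4 = n, m' 7 = 33 * n + 16 & m' 10 = 16].
Proof.
move=> Hn HW Hb HL H1 H3 H4 H7 H10.
pose I := fun j (m : memory) => Dinv W n c j.+1 m.
have Hit : forall j m, j < n.-1 -> I j m -> exists k m',
      k + 10 * (fun m : memory => m 14) m' <= 25 + 10 * (fun m : memory => m 14) m /\
      steps W (69, m) (69, m') k /\ I j.+1 m'.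
  move=> j m1 Hj [GL [Gb [GF [G1 [G3 [G4 [G7 [G10 [G13 [G14 [Hq Hqn]]]]]]]]]]].
  have HV : m1 (m1 3 + m1 13) = c j.+1 by rewrite G3 G13; apply: GL; lia.
  have [k1 [m2 [Hs1 [Hk1 HK]]]] : exists k1 m2, steps W (69, m1) (73, m2) k1 /\ k1 <= 4 /\
      Kst W n c j.+1 (Fb c j.+1) m2.
    do 2 eexists; split; last split.
    1: { do 4 stp. apply: st0; bnd_tac. }
    by [].
    split; first by move=> t Ht; norm; apply: GL.
    split; first by bnd_tac.
    split; first by move=> p Hp1 Hp2; norm; apply: GF.
    split; last by apply: K_init.
    repeat split; norm; lia.
  have [k2 [m3 [Hk2 [Hs2 HD]]]] := inner HW HK.
  exists (k1 + k2), m3; split; last split=> //; last exact: steps_trans Hs1 Hs2.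
  rewrite /= G14; lia.
have Hex : forall m, I n.-1 m -> exists k m', k <= 2 /\ steps W (69, m) (89, m') k /\
    [/\ FR n c n m', m' 1 = 1, m' 4 = n, m' 7 = 33 * n + 16 & m' 10 = 16].
  move=> m1 [GL [Gb [GF [G1 [G3 [G4 [G7 [G10 [G13 [G14 [Hq Hqn]]]]]]]]]]].
  do 2 eexists; split; last split.
  2: { do 2 stp. apply: st0; bnd_tac. }
  by [].
  split; norm; try lia.
  by move=> p Hp1 Hp2; rewrite updE; rif; apply: GF => //; lia.
have H5 : exists k m', k <= 4 /\ steps W (65, m) (69, m') k /\ I 0 m'.
  do 2 eexists; split; last split.
  2: { do 4 stp. apply: st0; bnd_tac. }
  by [].
  split; first by move=> t Ht; norm; apply: HL.
  split; first by bnd_tac.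
  split; first by move=> p Hp1 Hp2; (have -> : p = 1 by lia); norm; rewrite F1.
  repeat split; norm; rewrite ?F1; lia.
have [k1 [m1 [Hk1 [Hs1 HI1]]]] := H5.
have [k2 [m2 [Hk2 [Hs2 HQ]]]] := loop_gen Hit Hex (leq0n _) HI1.
exists (k1 + k2), m2; split; last split=> //; last exact: steps_trans Hs1 Hs2.
case: HI1 => _ [_ [_ [_ [_ [_ [_ [_ [_ [G14 _]]]]]]]]].
move: Hk2; rewrite /= G14 F1; lia.
Qed.

Definition outv (c : nat -> nat) p := if 0 < Fb c p then p.-1 else 0.

Lemma phaseE32 W n c m : 0 < n -> 34 * n + 68 <= W -> n < 16 -> bnd W m -> FR n c n m ->
  m 1 = 1 -> m 4 = n -> m 7 = 33 * n + 16 -> m 6 = 0 ->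
  exists k m', k <= 10 * n + 7 /\ steps W (92, m) (122, m') k /\
    forall p, 0 < p -> p <= n -> m' (n + p) = outv c p.
Proof.
move=> Hn HW Hc Hb HF H1 H4 H7 H6.
pose I := fun j (m : memory) => FR n c n m /\ bnd W m /\
   (forall p, 0 < p -> p <= j -> m (n + p) = outv c p) /\
   (m (32+1) = 1 /\ m (32+2) = n /\ m (32+3) = 33 * n + 16 /\ m (32+4) = n.+1 /\ m (32+5) = j.+1).
have Hit : forall j m, j < n -> I j m -> exists k m',
      k + 0 * (fun _ => 0) m' <= 10 + 0 * (fun _ => 0) m /\ steps W (97, m) (97, m') k /\ I j.+1 m'.
  move=> j m1 Hj [GF [Gb [GO [G1 [G2 [G3 [G4 G5]]]]]]].
  have HV : m1 (m1 (32+3) + m1 (32+5)) = Fb c j.+1 by rewrite G3 G5; apply: GF; lia.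
  have [Hz|Hnz] := posnP (Fb c j.+1).
  - do 2 eexists; split; last split.
    2: { do 9 stp. apply: st0; bnd_tac. }
    by [].
    split; first by move=> p Hp1 Hp2; norm; apply: GF.
    split; first by bnd_tac.
    split; last by (repeat split; norm; lia).
    move=> p Hp1 Hp2; norm.
    have [Hp|Hp] : p <= j \/ p = j.+1 by lia.
      by rif; apply: GO.
    by subst p; rif; rewrite HV /outv Hz.
  - do 2 eexists; split; last split.
    2: { do 10 stp. apply: st0; bnd_tac. }
    by [].
    split; first by move=> p Hp1 Hp2; norm; apply: GF.
    split; first by bnd_tac.
    split; last by (repeat split; norm; lia).
    move=> p Hp1 Hp2; norm.
    have [Hp|Hp] : p <= j \/ p = j.+1 by lia.
      by rif; apply: GO.
    by subst p; rif; rewrite /outv Hnz; lia.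
have Hex : forall m, I n m -> exists k m', k <= 2 /\ steps W (97, m) (122, m') k /\
    forall p, 0 < p -> p <= n -> m' (n + p) = outv c p.
  move=> m1 [GF [Gb [GO [G1 [G2 [G3 [G4 G5]]]]]]].
  do 2 eexists; split; last split.
  2: { do 2 stp. apply: st0; bnd_tac. }
  by [].
  by move=> p Hp1 Hp2; norm; apply: GO.
have H5 : exists k m', k <= 5 /\ steps W (92, m) (97, m') k /\ I 0 m'.
  do 2 eexists; split; last split.
  2: { do 5 stp. apply: st0; bnd_tac. }
  by [].
  split; first by move=> p Hp1 Hp2; norm; apply: HF.
  split; first by bnd_tac.
  split; first by move=> p Hp1 Hp2; lia.
  repeat split; norm; lia.
have [k1 [m1 [Hk1 [Hs1 HI1]]]] := H5.
have [k2 [m2 [Hk2 [Hs2 HQ]]]] := loop_gen Hit Hex (leq0n n) HI1.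
exists (k1 + k2), m2; split; last split=> //; last exact: steps_trans Hs1 Hs2.
move: Hk2; rewrite /= muln0 addn0 subn0; lia.
Qed.

Lemma phaseE0 W n c m : 0 < n -> 34 * n + 68 <= W -> 16 <= n -> bnd W m -> FR n c n m ->
  m 1 = 1 -> m 4 = n -> m 7 = 33 * n + 16 -> m 6 = 0 ->
  exists k m', k <= 10 * n + 7 /\ steps W (107, m) (122, m') k /\
    forall p, 0 < p -> p <= n -> m' (n + p) = outv c p.
Proof.
move=> Hn HW Hc Hb HF H1 H4 H7 H6.
pose I := fun j (m : memory) => FR n c n m /\ bnd W m /\
   (forall p, 0 < p -> p <= j -> m (n + p) = outv c p) /\
   (m (0+1) = 1 /\ m (0+2) = n /\ m (0+3) = 33 * n + 16 /\ m (0+4) = n.+1 /\ m (0+5) = j.+1).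
have Hit : forall j m, j < n -> I j m -> exists k m',
      k + 0 * (fun _ => 0) m' <= 10 + 0 * (fun _ => 0) m /\ steps W (112, m) (112, m') k /\ I j.+1 m'.
  move=> j m1 Hj [GF [Gb [GO [G1 [G2 [G3 [G4 G5]]]]]]].
  have HV : m1 (m1 (0+3) + m1 (0+5)) = Fb c j.+1 by rewrite G3 G5; apply: GF; lia.
  have [Hz|Hnz] := posnP (Fb c j.+1).
  - do 2 eexists; split; last split.
    2: { do 9 stp. apply: st0; bnd_tac. }
    by [].
    split; first by move=> p Hp1 Hp2; norm; apply: GF.
    split; first by bnd_tac.
    split; last by (repeat split; norm; lia).
    move=> p Hp1 Hp2; norm.
    have [Hp|Hp] : p <= j \/ p = j.+1 by lia.
      by rif; apply: GO.
    by subst p; rif; rewrite HV /outv Hz.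
  - do 2 eexists; split; last split.
    2: { do 10 stp. apply: st0; bnd_tac. }
    by [].
    split; first by move=> p Hp1 Hp2; norm; apply: GF.
    split; first by bnd_tac.
    split; last by (repeat split; norm; lia).
    move=> p Hp1 Hp2; norm.
    have [Hp|Hp] : p <= j \/ p = j.+1 by lia.
      by rif; apply: GO.
    by subst p; rif; rewrite /outv Hnz; lia.
have Hex : forall m, I n m -> exists k m', k <= 2 /\ steps W (112, m) (122, m') k /\
    forall p, 0 < p -> p <= n -> m' (n + p) = outv c p.
  move=> m1 [GF [Gb [GO [G1 [G2 [G3 [G4 G5]]]]]]].
  do 2 eexists; split; last split.
  2: { do 2 stp. apply: st0; bnd_tac. }
  by [].
  by move=> p Hp1 Hp2; norm; apply: GO.
have H5 : exists k m', k <= 5 /\ steps W (107, m) (112, m') k /\ I 0 m'.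
  do 2 eexists; split; last split.
  2: { do 5 stp. apply: st0; bnd_tac. }
  by [].
  split; first by move=> p Hp1 Hp2; norm; apply: HF.
  split; first by bnd_tac.
  split; first by move=> p Hp1 Hp2; lia.
  repeat split; norm; lia.
have [k1 [m1 [Hk1 [Hs1 HI1]]]] := H5.
have [k2 [m2 [Hk2 [Hs2 HQ]]]] := loop_gen Hit Hex (leq0n n) HI1.
exists (k1 + k2), m2; split; last split=> //; last exact: steps_trans Hs1 Hs2.
move: Hk2; rewrite /= muln0 addn0 subn0; lia.
Qed.

Lemma nthA i : i < 15 ->
  nth IHalt P (8 + 2 * i) = IAdd 0 0 1 /\ nth IHalt P (8 + 2 * i).+1 = IStore 0 (i + 2).
Proof.
by move: i; do 15 case=> //.
Qed.

Definition Ainv W n c i (m : memory) :=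
  bnd W m /\ m 0 = 32 * n + i /\ m 1 = 1 /\
  (forall t, t <= i -> t < n -> m (32 * n + t) = c t) /\
  (forall a, i + 2 <= a -> a <= n -> m a = c a.-1).

Lemma Apair W n c i m : 0 < n -> 34 * n + 68 <= W -> i < 15 -> Ainv W n c i m ->
  exists m', steps W (8 + 2 * i, m) ((8 + 2 * i).+2, m') 2 /\ Ainv W n c i.+1 m'.
Proof.
move=> Hn HW Hi [Gb [G0 [G1 [GS GI]]]].
have [N1 N2] := nthA Hi.
eexists; split.
  eapply stS; first exact: Gb.
    by rewrite /step N1.
  eapply stS; first by bnd_tac.
    by rewrite /step N2.
  apply: st0; bnd_tac; rewrite /=; apply: leq_trans (Gb _) _; lia.
split; first by bnd_tac; rewrite /=; apply: leq_trans (Gb _) _; lia.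
split; first by norm; lia.
split; first by norm; lia.
split.
  move=> t Ht Htn; norm.
  have [Ht'|Ht'] : t <= i \/ t = i.+1 by lia.
    by rif; apply: GS.
  by subst t; rif; rewrite GI //; [congr c|]; lia.
by move=> a Ha1 Ha2; norm; apply: GI; lia.
Qed.

Lemma Aloop W n c : 0 < n -> 34 * n + 68 <= W -> forall d i m, i + d = 15 -> Ainv W n c i m ->
  exists m', steps W (8 + 2 * i, m) (38, m') (2 * d) /\ Ainv W n c 15 m'.
Proof.
move=> Hn HW; elim=> [|d IH] i m Hid HA.
  have Hi : i = 15 by lia.
  subst i; exists m; split=> //; apply: st0; by case: HA.
have Hi15 : i < 15 by lia.
have [m1 [Hs1 HA1]] := Apair Hn HW Hi15 HA.
have Hid' : i.+1 + d = 15 by lia.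
have [m2 [Hs2 HA2]] := IH i.+1 m1 Hid' HA1.
exists m2; split=> //.
have -> : 2 * d.+1 = 2 + 2 * d by lia.
apply: steps_trans Hs1 _.
by have -> : (8 + 2 * i).+2 = 8 + 2 * i.+1 by lia.
Qed.

Lemma phaseA W n c m : 0 < n -> 34 * n + 68 <= W -> bnd W m -> m 0 = n ->
  (forall a, 0 < a -> a <= n -> m a = c a.-1) ->
  exists m', steps W (0, m) (38, m') 38 /\ m' 0 = 32 * n + 15 /\ m' 1 = 1 /\ D1 n c m'.
Proof.
move=> Hn HW Hb H0 HI.
have [m8 [Hs8 HA]] : exists m8, steps W (0, m) (8, m8) 8 /\ Ainv W n c 0 m8.
  eexists; split.
    do 8 stp. apply: st0; bnd_tac.
  split; first by bnd_tac.
  split; first by norm; lia.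
  split; first by norm.
  split.
    move=> t Ht Htn; have -> : t = 0 by lia.
    by norm; rif; rewrite HI //; lia.
  by move=> a Ha1 Ha2; norm; rewrite HI //; lia.
have H15 : 0 + 15 = 15 by [].
have [m' [Hs HA']] := Aloop Hn HW H15 HA.
exists m'; split; first by apply: steps_trans Hs8 Hs.
case: HA' => _ [G0 [G1 [GS GI]]]; split=> //; split=> //; split.
  by move=> t Ht1 Ht2; apply: GS; lia.
by move=> a Ha1 Ha2; apply: GI; lia.
Qed.


Definition code (A : finType) (x : A) : nat := (enum_rank x).+1.

Lemma isb_take (A : finType) (u : seq A) (x0 : A) i b : i <= size u -> b < i ->
  isb (fun t => nth 0 (map (@code A) u) t) i b <->
  take b (take i u) = drop (i - b) (take i u).
Proof.
move=> Hi Hb.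
have Hc : forall t, t < size u -> nth 0 (map (@code A) u) t = code (nth x0 u t).
  by move=> t Ht; rewrite (nth_map x0).
have Hsx : size (take i u) = i by rewrite size_take; case: ifP; lia.
rewrite isbP; split.
  case=> _ H; apply: (@eq_from_nth _ x0).
    by rewrite size_take size_drop Hsx; case: ifP; lia.
  move=> t; rewrite size_take Hsx; case: ifP => [_ Ht|]; last lia.
  have Ht' : t < i by lia.
  rewrite nth_take // nth_drop.
  have E1 : nth x0 (take i u) t = nth x0 u t by apply: nth_take.
  have E2 : nth x0 (take i u) (i - b + t) = nth x0 u (i - b + t) by apply: nth_take; lia.
  rewrite E1 E2.
  have := H t Ht; rewrite (Hc t) ?(Hc (i - b + t)); try lia.
  by rewrite /code => /(congr1 predn) /= E; apply: enum_rank_inj; apply: val_inj.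
move=> H; split=> // t Ht.
have := congr1 (nth x0 ^~ t) H.
rewrite nth_take // nth_drop.
have E1 : nth x0 (take i u) t = nth x0 u t by apply: nth_take; lia.
have E2 : nth x0 (take i u) (i - b + t) = nth x0 u (i - b + t) by apply: nth_take; lia.
rewrite E1 E2.
by rewrite (Hc t) ?(Hc (i - b + t)); try lia; move=> ->.
Qed.

Lemma lseed_out (A : finType) (u : seq A) i : 0 < i -> i <= size u ->
  lseedmax_is (take i u) (outv (fun t => nth 0 (map (@code A) u) t) i).
Proof.
move=> Hi Hin.
have x0 : A.
  destruct u as [|a u']; [simpl in Hin; exfalso; lia|exact a].
set c := fun t => _.
have Hsx : size (take i u) = i by rewrite size_take; case: ifP; lia.
rewrite /outv.
have [HF|HF] := posnP (Fb c i).
- idtac.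
  have Hnb : forall b, 0 < b < size (take i u) ->
      take b (take i u) <> drop (size (take i u) - b) (take i u).
    move=> b Hb; rewrite Hsx => E.
    have Hisb : isb c i b by apply/(isb_take x0) => //; lia.
    have := F_max Hisb; lia.
  have HS := S2 (ltac:(lia) : 0 < size (take i u)) Hnb.
  split; last by move=> l Hl; apply: HS; lia.
  right; split=> // l Hl; apply: HS; lia.
- have Hisb := F_isb c Hi.
  have Hlt := F_lt c Hi.
  have E : take (Fb c i) (take i u) = drop (size (take i u) - Fb c i) (take i u).
    by rewrite Hsx; apply/(isb_take x0).
  have HL := S1 (ltac:(lia) : 0 < Fb c i < size (take i u)) E.
  split; last by move=> l; rewrite Hsx => Hl; exfalso; move: Hl; case: (i) => //= k; lia.
  have Ei : i = i.-1.+1 by rewrite prednK.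
  left; split; first by rewrite Hsx; lia.
  by rewrite Hsx in HL.
Qed.

Lemma Wbnd n s : 34 * n + 68 <= (n + 2) ^ (s + 7) /\ n <= (n + 2) ^ (s + 7) /\
  s <= (n + 2) ^ (s + 7).
Proof.
have E : (n + 2) ^ (s + 7) = (n + 2) * (n + 2) ^ (s + 6).
  by rewrite -expnS; congr (_ ^ _); lia.
have H1 : 2 ^ (s + 6) <= (n + 2) ^ (s + 6) by rewrite leq_exp2r; lia.
have H2 : 2 ^ (s + 6) = 2 ^ s * 64 by rewrite expnD.
have H3 : s < 2 ^ s by apply: ltn_expl.
rewrite E; move: H1; rewrite H2; move: (2 ^ s) ((n + 2) ^ (s + 6)) H3 => X Y H3 H1.
split; first nia.
split; nia.
Qed.

Lemma onth_code (A : finType) (u : seq A) t : t < size u ->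
  match onth u t with Some x => (enum_rank x).+1 | None => 0 end =
  nth 0 (map (@code A) u) t.
Proof. by elim: u t => [|x u IH] [|t] //= Ht; apply: IH. Qed.

Lemma init_bnd (A : finType) (u : seq A) W : size u <= W -> #|A| <= W ->
  bnd W (init_mem u).
Proof.
move=> H1 H2 a; rewrite /init_mem; case: ifP => // _.
case: onth => // x; apply: leq_trans H2; exact: ltn_ord.
Qed.

Lemma init_val (A : finType) (u : seq A) a : 0 < a -> a <= size u ->
  init_mem u a = nth 0 (map (@code A) u) a.-1.
Proof.
move=> Ha1 Ha2; rewrite /init_mem; have -> : (a == 0) = false by lia.
by rewrite onth_code //; lia.
Qed.

Lemma zero_case W m : bnd W m -> m 0 = 0 -> steps W (0, m) (122, m) 1.
Proof. move=> Hb H0; stp. by apply: st0. Qed.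

Theorem theorem3 (A : finType) :
  exists (P : program) (C D : nat),
    forall u : seq A,
      exists (k : nat) (pc : nat) (m : memory),
        [/\ k <= C * (size u).+1,
            run P k (0, init_mem u) = Some (pc, m),
            step P (pc, m) = None,
            values_bounded P k (0, init_mem u) ((size u).+2 ^ D) &
            forall i, 1 <= i <= size u -> lseedmax_is (take i u) (m (size u + i))].
Proof.
exists P, 200, (#|A| + 7) => u.
set n := size u.
set W := n.+2 ^ (#|A| + 7).
have [HW [HWn HWs]] := Wbnd n #|A|.
rewrite -/W (_ : n + 2 = n.+2) in HW HWn HWs; last lia.
have Hb0 : bnd W (init_mem u) by apply: init_bnd.
have Hfin : forall k m, steps W (0, init_mem u) (122, m) k -> k <= 200 * n.+1 ->
    (forall i, 1 <= i <= n -> lseedmax_is (take i u) (m (n + i))) ->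
    exists (k : nat) (pc : nat) (m : memory),
        [/\ k <= 200 * n.+1,
            run P k (0, init_mem u) = Some (pc, m),
            step P (pc, m) = None,
            values_bounded P k (0, init_mem u) W &
            forall i, 1 <= i <= n -> lseedmax_is (take i u) (m (n + i))].
  move=> k m Hs Hk Ho; have [Hr Hv] := steps_run Hs.
  by exists k, 122, m; split.
have [Hn0|Hn] := posnP n.
  apply: (Hfin 1 (init_mem u)).
  - by apply: zero_case => //; exact: Hn0.
  - lia.
  - by move=> i Hi; exfalso; lia.
set c := fun t => nth 0 (map (@code A) u) t.
have H0 : init_mem u 0 = n by [].
have HI : forall a, 0 < a -> a <= n -> init_mem u a = c a.-1 by move=> a; apply: init_val.
have [m1 [Hs1 [G0 [G1 GD]]]] := phaseA Hn HW Hb0 H0 HI.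
have Hb1 := steps_bnd_end Hs1.
have [k2 [m2 [Hk2 [Hs2 [G20 G21 G24 GD2]]]]] := phaseB Hn HW Hb1 G0 G1 GD.
have Hb2 := steps_bnd_end Hs2.
have [k3 [m3 [Hk3 [Hs3 [GL3 G31 G33 G34 [G37 G310]]]]]] := phaseC Hn HW Hb2 G20 G21 G24 GD2.
have Hb3 := steps_bnd_end Hs3.
have [k4 [m4 [Hk4 [Hs4 [GF4 G41 G44 G47 G410]]]]] := phaseD Hn HW Hb3 GL3 G31 G33 G34 G37 G310.
have Hb4 := steps_bnd_end Hs4.
have Hpre : steps W (0, init_mem u) (89, m4) (38 + k2 + k3 + k4).
  apply: steps_trans _ Hs4; apply: steps_trans _ Hs3; exact: steps_trans Hs1 Hs2.
have Hout : forall m : memory, (forall p, 0 < p -> p <= n -> m (n + p) = outv c p) ->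
    forall i, 1 <= i <= n -> lseedmax_is (take i u) (m (n + i)).
  move=> m Hm i /andP [Hi1 Hi2]; rewrite Hm //; exact: lseed_out.
have [Hsm|Hlg] := ltnP n 16.
- have [m5 Hs5] : exists m5, steps W (89, m4) (92, m5) 3 /\
     [/\ bnd W m5, FR n c n m5, m5 1 = 1, m5 4 = n & m5 7 = 33 * n + 16 /\ m5 6 = 0].
    eexists; split.
      do 3 stp. apply: st0; bnd_tac.
    split; [by bnd_tac | by move=> p Hp1 Hp2; norm; apply: GF4 | by norm | by norm |].
    by split; norm.
  case: Hs5 => Hs5 [Hb5 GF5 G51 G54 [G57 G56]].
  have [k6 [m6 [Hk6 [Hs6 Ho]]]] := phaseE32 Hn HW Hsm Hb5 GF5 G51 G54 G57 G56.
  apply: (Hfin _ m6 (steps_trans (steps_trans Hpre Hs5) Hs6)); last exact: Hout.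
  lia.
- have [m5 Hs5] : exists m5, steps W (89, m4) (107, m5) 3 /\
     [/\ bnd W m5, FR n c n m5, m5 1 = 1, m5 4 = n & m5 7 = 33 * n + 16 /\ m5 6 = 0].
    eexists; split.
      do 3 stp. apply: st0; bnd_tac.
    split; [by bnd_tac | by move=> p Hp1 Hp2; norm; apply: GF4 | by norm | by norm |].
    by split; norm.
  case: Hs5 => Hs5 [Hb5 GF5 G51 G54 [G57 G56]].
  have [k6 [m6 [Hk6 [Hs6 Ho]]]] := phaseE0 Hn HW Hlg Hb5 GF5 G51 G54 G57 G56.
  apply: (Hfin _ m6 (steps_trans (steps_trans Hpre Hs5) Hs6)); last exact: Hout.
  lia.
Qed.
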